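(* Let $J\in M(n,\mathbb{R})$, $G=U(n)$, $G'=O(n)$, and let $L$ be a subgroup of $G$. Let $G_J:=\{g\in G: gJ=Jg\}$. If there exists $g\in G$ such that $\mathrm{Ad}(L)(\mathrm{Ad}(g)J)\cap M(n,\mathbb{R})=\emptyset$, then $LG'G_J\subsetneq G$.
   Context: $\mathrm{Ad}(g)J:=gJg^{-1}$ for $g\in U(n)$, and $\mathrm{Ad}(L)P:=\{\mathrm{Ad}(x)P:x\in L\}$. $LG'G_J=\{xyz:x\in L,y\in G',z\in G_J\}$. *)

(* Defs.v *)
From HB Require Import structures.
From mathcomp Require Import all_boot all_order all_algebra.
From mathcomp Require Import complex.
From mathcomp Require Import reals.
Set Implicit Arguments. Unset Strict Implicit. Unset Printing Implicit Defensive.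
Import Order.TTheory GRing.Theory Num.Theory.
Local Open Scope ring_scope.

Section Defs.
Variables (R : realType) (n : nat).

Definition cmx (A : 'M[R]_n) : 'M[R[i]]_n := map_mx (fun x => Complex x 0) A.

Definition is_real_cmx (J : 'M[R[i]]_n) : Prop := exists A : 'M[R]_n, J = cmx A.

Definition adjc (g : 'M[R[i]]_n) : 'M[R[i]]_n := (map_mx conjc g)^T.

Definition unitary (g : 'M[R[i]]_n) : Prop := g *m adjc g = 1%:M.

Definition orthogonal (g : 'M[R[i]]_n) : Prop := unitary g /\ is_real_cmx g.

Definition Ad (g J : 'M[R[i]]_n) : 'M[R[i]]_n := g *m J *m invmx g.

Definition stabJ (J g : 'M[R[i]]_n) : Prop := unitary g /\ g *m J = J *m g.

Definition subgroupU (L : 'M[R[i]]_n -> Prop) : Prop :=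
  (forall x, L x -> unitary x) /\ L 1%:M /\
  (forall x y, L x -> L y -> L (x *m y)) /\
  (forall x, L x -> L (invmx x)).

Definition prodLGGJ (L : 'M[R[i]]_n -> Prop) (J : 'M[R[i]]_n) (u : 'M[R[i]]_n) : Prop :=
  exists x y z, [/\ L x, orthogonal y, stabJ J z & u = x *m y *m z].

End Defs.

(* Main.v *)
Require Import Defs.
From HB Require Import structures.
From mathcomp Require Import all_boot all_order all_algebra.
From mathcomp Require Import complex.
From mathcomp Require Import reals.
Import Order.TTheory GRing.Theory Num.Theory.
Local Open Scope ring_scope.

Section H.
Variables (R : realType) (n : nat).
Implicit Types (A B : 'M[R[i]]_n) (X Y : 'M[R]_n).

Lemma cmxE X : cmx X = map_mx (real_complex R) X.
Proof. by apply/matrixP => i j; rewrite !mxE. Qed.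

Lemma cmxM X Y : cmx (X *m Y) = cmx X *m cmx Y.
Proof. by rewrite !cmxE map_mxM. Qed.

Lemma adjcM A B : adjc (A *m B) = adjc B *m adjc A.
Proof. by rewrite /adjc map_mxM trmx_mul. Qed.

Lemma adjc_cmx X : adjc (cmx X) = cmx X^T.
Proof. by apply/matrixP => i j; rewrite !mxE /=; congr Complex; rewrite oppr0. Qed.

Lemma unitaryV A : unitary A -> adjc A *m A = 1%:M.
Proof. by move=> h; apply: mulmx1C. Qed.

Lemma unitary_inv A : unitary A -> invmx A = adjc A.
Proof.
move=> h; have [uA _] := mulmx1_unit h.
by rewrite -[invmx A]mulmx1 -h mulmxA mulVmx // mul1mx.
Qed.

Lemma unitaryM A B : unitary A -> unitary B -> unitary (A *m B).
Proof.
move=> hA hB; rewrite /unitary adjcM mulmxA -(mulmxA A) hB mulmx1 //.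
Qed.
End H.
Arguments unitaryV {R n A}.
Arguments unitary_inv {R n A}.

Theorem lemma6p1 (R : realType) (n : nat) (J : 'M[R]_n)
    (L : 'M[R[i]]_n -> Prop) :
  subgroupU L ->
  (exists g : 'M[R[i]]_n, unitary g /\
     forall x, L x -> ~ is_real_cmx (Ad x (Ad g (cmx J)))) ->
  (forall u, prodLGGJ L (cmx J) u -> unitary u) /\
  (exists u, unitary u /\ ~ prodLGGJ L (cmx J) u).
Proof.
move=> [LU [L1 [LM LV]]] [g [ug hg]]; split.
  move=> u [x [y [z [Lx [uy _] [uz _] ->]]]].
  by apply: unitaryM; [apply: unitaryM => //; apply: LU|].
exists g; split => //; move=> [x [y [z [Lx [uy [Y eY]] [uz zJ] eg]]]].
apply: (hg (invmx x) (LV _ Lx)).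
have ux := LU _ Lx.
exists (Y *m J *m Y^T).
rewrite /Ad invmxK !unitary_inv // eg !adjcM.
rewrite -!mulmxA (unitaryV ux) mulmx1 !mulmxA (unitaryV ux) mul1mx.
rewrite -(mulmxA y z) zJ mulmxA -(mulmxA _ z (adjc z)) uz mulmx1.
by rewrite eY adjc_cmx !cmxM.
Qed.
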